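(* There is a one-to-one correspondence between length monotonous automatic presentations of $\omega$-words over $\Sigma$ and total automatic transductions $f:\{a\}^*\to\Sigma^*$ from words over the unary alphabet $\{a\}$ to finite words. Moreover, when an automatic $\omega$-word $w$ corresponds to a transduction $f$, then $w=\Pi f$.
   Context: Convolution of words: for words $x_1,\dots,x_r$ over an alphabet $B$, $x_1\otimes\cdots\otimes x_r$ is the word over $(B\cup\{\text{␣}\})^r$ whose $i$-th letter is the tuple of $i$-th letters. Shorter words are padded on the right with a fresh padding symbol ␣ up to the maximal length. An automatic presentation of an $\omega$-word over $\Sigma$ is a tuple $S=(B,A_{univ},(A_\sigma)_{\sigma\in\Sigma},A_\le)$ where: - $B$ is a finite alphabet; - $A_{univ}$ and the $A_\sigma$ are finite automata over $B$; - $A_\le$ is a finite automaton over $(B\cup\{\text{␣}\})^2$. The presented structure has universe $L(A_{univ})$, the predicate $\sigma$ holding at $x$ iff $x\in L(A_\sigma)$, and $x\le y$ iff $x\otimes y\in L(A_\le)$. It is required to be isomorphic to an $\omega$-word, i.e. to $(\mathbb N,\le)$ with each element carrying exactly one label $\sigma\in\Sigma$. The presentation is length monotonous if $|x|<|y|$ implies $x\le y$ for all elements $x,y$. An automatic transduction from $\{a\}^*$ to $\Sigma^*$ is a tuple $(B,A_{dom},A_{univ},(A_\sigma)_{\sigma\in\Sigma},A_\le)$ where: - $B$ is a finite work alphabet; - $A_{dom}$ is a finite automaton over $\{a\}$; - $A_{univ}$ and the $A_\sigma$ are finite automata over $\{a\}\times B$; - $A_\le$ is a finite automaton over $\{a\}\times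 B\times B$. On $a^n\in L(A_{dom})$ the output is the structure with: - universe $V=\{x\in B^n: a^n\otimes x\in L(A_{univ})\}$; - labels $\sigma$ at $x$ iff $a^n\otimes x\in L(A_\sigma)$; - order $x\le y$ iff $a^n\otimes x\otimes y\in L(A_\le)$. It is required to be a finite word structure, which is identified with a word of $\Sigma^*$. It is total if $L(A_{dom})=\{a\}^*$. For a total $f:\{a\}^*\to\Sigma^*$, $\Pi f$ denotes the concatenation $f(\varepsilon)f(a)f(aa)\cdots$. *)

(* Defs.v *)
From mathcomp Require Import all_boot.
Set Implicit Arguments. Unset Strict Implicit. Unset Printing Implicit Defensive.

Record nfa (A : Type) := Nfa {
  nst : finType;
  ninit : pred nst;
  nfin : pred nst;
  ntr : nst -> A -> pred nst }.

Fixpoint nacc_from (A : Type) (M : nfa A) (q : nst M) (w : seq A) : bool :=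
  match w with
  | [::] => @nfin A M q
  | a :: w' => [exists q', @ntr A M q a q' && @nacc_from A M q' w']
  end.

Definition accepts (A : Type) (M : nfa A) (w : seq A) : bool :=
  [exists q, @ninit A M q && @nacc_from A M q w].

(* x (x) y over (B u {pad})^2 : padding symbol is None *)
Definition conv2 (B : Type) (x y : seq B) : seq (option B * option B) :=
  mkseq (fun i => (onth x i, onth y i)) (maxn (size x) (size y)).

(* a^n (x) x over {a} x B, where {a} = unit and n = size x *)
Definition conv_a (B : Type) (x : seq B) : seq (unit * B) := map (pair tt) x.

(* a^n (x) x (x) y over {a} x B x B, for x y of length n *)
Definition conv_a2 (B : Type) (x y : seq B) : seq (unit * B * B) :=
  map (fun p => (tt, p.1, p.2)) (zip x y).

Record presentation (Sigma B : finType) := Pres {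
  p_univ : nfa B;
  p_lab : Sigma -> nfa B;
  p_le : nfa (option B * option B) }.

(* S is an automatic presentation of the omega-word w : nat -> Sigma:
   h is an isomorphism from (N, <=, labels of w) onto the presented structure *)
Definition presents (Sigma B : finType) (S : presentation Sigma B)
    (w : nat -> Sigma) : Prop :=
  exists h : nat -> seq B,
    (forall i, accepts (p_univ S) (h i)) /\
    (forall x, accepts (p_univ S) x -> exists i, h i = x) /\
    (forall i j, accepts (p_le S) (conv2 (h i) (h j)) <-> i <= j) /\
    (forall i (s : Sigma), accepts (p_lab S s) (h i) <-> s = w i).

Definition length_monotonous (Sigma B : finType) (S : presentation Sigma B) :=
  forall x y : seq B, accepts (p_univ S) x -> accepts (p_univ S) y ->
    size x < size y -> accepts (p_le S) (conv2 x y).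

Record transduction (Sigma B : finType) := Trans {
  t_dom : nfa unit;
  t_univ : nfa (unit * B);
  t_lab : Sigma -> nfa (unit * B);
  t_le : nfa (unit * B * B) }.

(* On input a^n the transduction T outputs the finite word u : the output
   structure is isomorphic (via h) to the word structure of u. *)
Definition outputs (Sigma B : finType) (T : transduction Sigma B) (n : nat)
    (u : seq Sigma) : Prop :=
  exists h : nat -> seq B,
    (forall i, i < size u -> size (h i) = n /\ accepts (t_univ T) (conv_a (h i))) /\
    (forall x : seq B, size x = n -> accepts (t_univ T) (conv_a x) ->
        exists2 i, i < size u & h i = x) /\
    (forall i j, i < size u -> j < size u ->
        (accepts (t_le T) (conv_a2 (h i) (h j)) <-> i <= j)) /\
    (forall i (s : Sigma), i < size u ->
        (accepts (t_lab T s) (conv_a (h i)) <-> onth u i = Some s)).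

Definition total_transduction (Sigma B : finType) (T : transduction Sigma B) :=
  forall n, accepts (t_dom T) (nseq n tt) /\ exists u, outputs T n u.

(* Pi u = w : the concatenation u 0 ++ u 1 ++ ... is the omega-word w *)
Definition prefix_cat (Sigma : Type) (u : nat -> seq Sigma) (k : nat) :=
  flatten (map u (iota 0 k)).

Definition Pi_eq (Sigma : Type) (u : nat -> seq Sigma) (w : nat -> Sigma) :=
  (forall N, exists k, N < size (prefix_cat u k)) /\
  (forall k i, i < size (prefix_cat u k) -> onth (prefix_cat u k) i = Some (w i)).

Definition corresponds (Sigma B : finType) (S : presentation Sigma B)
    (T : transduction Sigma B) : Prop :=
  (forall x : seq B, accepts (p_univ S) x <-> accepts (t_univ T) (conv_a x)) /\
  (forall (s : Sigma) (x : seq B), accepts (p_univ S) x ->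
      (accepts (p_lab S s) x <-> accepts (t_lab T s) (conv_a x))) /\
  (forall x y : seq B, accepts (p_univ S) x -> accepts (p_univ S) y ->
      size x = size y ->
      (accepts (p_le S) (conv2 x y) <-> accepts (t_le T) (conv_a2 x y))).

Definition same_pres (Sigma B : finType) (S S' : presentation Sigma B) :=
  (forall x, accepts (p_univ S) x <-> accepts (p_univ S') x) /\
  (forall s x, accepts (p_univ S) x ->
      (accepts (p_lab S s) x <-> accepts (p_lab S' s) x)) /\
  (forall x y, accepts (p_univ S) x -> accepts (p_univ S) y ->
      (accepts (p_le S) (conv2 x y) <-> accepts (p_le S') (conv2 x y))).

Definition same_trans (Sigma B : finType) (T T' : transduction Sigma B) :=
  (forall x, accepts (t_univ T) (conv_a x) <-> accepts (t_univ T') (conv_a x)) /\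
  (forall s x, accepts (t_univ T) (conv_a x) ->
      (accepts (t_lab T s) (conv_a x) <-> accepts (t_lab T' s) (conv_a x))) /\
  (forall x y, accepts (t_univ T) (conv_a x) -> accepts (t_univ T) (conv_a y) ->
      size x = size y ->
      (accepts (t_le T) (conv_a2 x y) <-> accepts (t_le T') (conv_a2 x y))).

(* Main.v *)
Require Import Defs.
From mathcomp Require Import all_boot zify.
From Stdlib Require Import IndefiniteDescription.
Set Implicit Arguments. Unset Strict Implicit. Unset Printing Implicit Defensive.

Lemma conv2_cons (B : Type) (a b : option B) x y (x' y' : seq B) :
  (forall i, onth x' i.+1 = onth x i) -> (forall i, onth y' i.+1 = onth y i) ->
  onth x' 0 = a -> onth y' 0 = b ->
  maxn (size x') (size y') = (maxn (size x) (size y)).+1 ->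
  conv2 x' y' = (a, b) :: conv2 x y.
Proof.
move=> Hx Hy Ha Hb Hs; rewrite /conv2 /mkseq Hs -Ha -Hb.
rewrite [iota _ _]/= map_cons -[1]/(1+0) iotaDl -map_comp.
congr (_ :: _); apply: eq_map => i /=.
by rewrite add0n -Hx -Hy.
Qed.

Lemma conv2_cc (B : Type) (a b : B) x y :
  conv2 (a :: x) (b :: y) = (Some a, Some b) :: conv2 x y.
Proof. by apply: conv2_cons => //=; rewrite maxnSS. Qed.
Lemma conv2_nc (B : Type) (b : B) y :
  conv2 [::] (b :: y) = (None, Some b) :: conv2 [::] y.
Proof. by apply: conv2_cons => //= [[]|] //; rewrite !max0n. Qed.
Lemma conv2_cn (B : Type) (a : B) x :
  conv2 (a :: x) [::] = (Some a, None) :: conv2 x [::].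
Proof. apply: conv2_cons => //=. all: try by case. Qed.
Lemma conv2_nn (B : Type) : conv2 ([::] : seq B) [::] = [::].
Proof. by []. Qed.

Section Nfa.
Variable B : finType.

Definition projA (M : nfa (unit * B)) : nfa B :=
  @Nfa B (nst M) (@ninit _ M) (@nfin _ M) (fun q b => @ntr _ M q (tt, b)).
Lemma projA_acc M x : accepts (projA M) x = accepts M (conv_a x).
Proof.
rewrite /accepts; apply: eq_existsb => q; congr (_ && _).
elim: x q => [|b x IH] q //=; apply: eq_existsb => q'; by rewrite IH.
Qed.

Definition liftA (M : nfa B) : nfa (unit * B) :=
  @Nfa (unit * B) (nst M) (@ninit _ M) (@nfin _ M) (fun q p => @ntr _ M q p.2).
Lemma liftA_acc M x : accepts (liftA M) (conv_a x) = accepts M x.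
Proof.
rewrite /accepts; apply: eq_existsb => q; congr (_ && _).
elim: x q => [|b x IH] q //=; apply: eq_existsb => q'; by rewrite IH.
Qed.

Definition liftLe (M : nfa (option B * option B)) : nfa (unit * B * B) :=
  @Nfa _ (nst M) (@ninit _ M) (@nfin _ M) (fun q p => @ntr _ M q (Some p.1.2, Some p.2)).
Lemma liftLe_acc M x y : size x = size y ->
  accepts (liftLe M) (conv_a2 x y) = accepts M (conv2 x y).
Proof.
move=> Hs; rewrite /accepts; apply: eq_existsb => q; congr (_ && _).
elim: x y Hs q => [|a x IH] [|b y] // [] Hs q.
rewrite conv2_cc /=; apply: eq_existsb => q'; by rewrite IH.
Qed.

Definition le_tr (M : nfa (unit * B * B)) (s : (nst M + bool)%type)
  (p : option B * option B) (s' : (nst M + bool)%type) : bool :=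
  match p with
  | (Some a, Some b) => match s, s' with
      | inl q, inl q' => @ntr _ M q (tt, a, b) q'
      | inr false, inr false => true
      | _, _ => false end
  | (None, Some _) => match s, s' with
      | inr _, inr true => true
      | _, _ => false end
  | _ => false end.

Definition mkLe (M : nfa (unit * B * B)) : nfa (option B * option B) :=
  @Nfa _ (nst M + bool)%type
    (fun s => match s with inl q => @ninit _ M q | inr b => ~~ b end)
    (fun s => match s with inl q => @nfin _ M q | inr b => b end)
    (@le_tr M).

Lemma mkLe_pad M y : @nacc_from _ (mkLe M) (inr true) (conv2 [::] y).
Proof.
elim: y => [|b y IH] //; rewrite conv2_nc /=; apply/existsP; by exists (inr true); rewrite IH.
Qed.

Lemma mkLe_free M x y : @nacc_from _ (mkLe M) (inr false) (conv2 x y) = (size x < size y).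
Proof.
elim: x y => [|a x IH] [|b y] //.
- rewrite conv2_nc /=; apply/existsP; exists (inr true); by rewrite mkLe_pad.
- rewrite conv2_cn /=; apply/existsP => -[[q|[]]] //.
- rewrite conv2_cc /= ltnS -IH; apply/existsP/idP => [[[q|[]]] //|H].
  by exists (inr false).
Qed.

Lemma mkLe_sim M x y q : @nacc_from _ (mkLe M) (inl q) (conv2 x y) =
  (size x == size y) && @nacc_from _ M q (conv_a2 x y).
Proof.
elim: x y q => [|a x IH] [|b y] q //.
- rewrite conv2_nc /=; apply/existsP => -[[q'|[]]] //.
- rewrite conv2_cn /=; apply/existsP => -[[q'|[]]] //.
- rewrite conv2_cc /= eqSS; apply/existsP/idP => [[[q'|[]]] //|].
    rewrite IH => /andP[H1 /andP[-> H2]] /=; apply/existsP; exists q'; by rewrite H1 H2.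
  case/andP=> Hs /existsP[q' /andP[H1 H2]]; exists (inl q'); by rewrite H1 IH Hs.
Qed.

Lemma mkLe_acc M x y : accepts (mkLe M) (conv2 x y) =
  (size x < size y) || ((size x == size y) && accepts M (conv_a2 x y)).
Proof.
apply/existsP/idP => [[[q|[]]] /=|].
- rewrite mkLe_sim => /andP[H1 /andP[-> H2]]; apply/orP; right; apply/existsP; exists q; by rewrite H1 H2.
- by [].
- by rewrite mkLe_free => ->.
case/orP => [H|/andP[Hs /existsP[q /andP[H1 H2]]]].
- by exists (inr false); rewrite /= mkLe_free.
by exists (inl q); rewrite /= mkLe_sim Hs H1 H2.
Qed.

Definition allA : nfa unit := @Nfa unit unit (fun _ => true) (fun _ => true) (fun _ _ _ => true).
Lemma allA_acc n : accepts allA (nseq n tt).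
Proof.
apply/existsP; exists tt => /=; elim: n => [|n IH] //=; apply/existsP; by exists tt.
Qed.
End Nfa.
Lemma seq_of_onth (T : Type) (v : seq T) f m : size v = m ->
  (forall j, j < m -> onth v j = Some (f j)) -> v = map f (iota 0 m).
Proof.
elim: v f m => [|x v IH] f [|m] //= [Hs] H.
have := H 0 erefl; case=> ->; congr (_ :: _).
rewrite -[1]/(1 + 0) iotaDl -map_comp; apply: IH => // j Hj.
by rewrite /= add1n -(H j.+1).
Qed.

Lemma onth_some (T : Type) (x0 : T) s j : j < size s -> onth s j = Some (nth x0 s j).
Proof. by move=> Hj; rewrite onthE (nth_map x0). Qed.

Lemma nth_leq s j k : sorted ltn s -> j < size s -> k < size s ->
  (nth 0 s j <= nth 0 s k) = (j <= k).
Proof.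
move=> Hs Hj Hk; case: (ltngtP j k) => [Hjk|Hkj|->]; last exact: leqnn.
- by rewrite ltnW // (sorted_ltn_nth ltn_trans 0 Hs).
- by rewrite leqNgt (sorted_ltn_nth ltn_trans 0 Hs).
Qed.

Lemma sorted_cat_lt (s1 s2 : seq nat) : sorted ltn s1 -> sorted ltn s2 ->
  (forall i j, i \in s1 -> j \in s2 -> i < j) -> sorted ltn (s1 ++ s2).
Proof.
case: s1 => [|x s1] //= H1 H2 H; rewrite cat_path H1 /=.
case: s2 H2 H => [|y s2] //= H2 H; rewrite H2 andbT; apply: H.
  by rewrite mem_last.
by rewrite mem_head.
Qed.

Lemma down_iota (s : seq nat) : sorted ltn s ->
  (forall i j, i \in s -> j <= i -> j \in s) -> s = iota 0 (size s).
Proof.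
move=> Hs Hd; have Hu := sorted_uniq ltn_trans ltnn Hs.
have Hlt x : x \in s -> x < size s.
  move=> Hx; have : {subset iota 0 x.+1 <= s}.
    by move=> j; rewrite mem_iota add0n ltnS => /andP[_ Hj]; exact: Hd Hx Hj.
  by move/(uniq_leq_size (iota_uniq 0 x.+1)); rewrite size_iota.
apply: (irr_sorted_eq ltn_trans ltnn Hs (iota_ltn_sorted 0 _)).
have Hsub : {subset s <= iota 0 (size s)}.
  by move=> x Hx; rewrite mem_iota add0n Hlt.
have [_ E] := @uniq_min_size _ s (iota 0 (size s)) Hu Hsub (eq_leq (size_iota _ _)).
exact: E.
Qed.
Section P1.
Variables (Sigma B : finType) (S : presentation Sigma B) (w : nat -> Sigma) (h : nat -> seq B).
Hypothesis hU : forall i, accepts (p_univ S) (h i).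
Hypothesis hS : forall x, accepts (p_univ S) x -> exists i, h i = x.
Hypothesis hO : forall i j, accepts (p_le S) (conv2 (h i) (h j)) <-> i <= j.
Hypothesis hL : forall i (s : Sigma), accepts (p_lab S s) (h i) <-> s = w i.

Lemma h_inj : injective h.
Proof.
move=> i j E; apply/eqP; rewrite eqn_leq; apply/andP; split.
- by apply/hO; rewrite E; apply/hO.
- by apply/hO; rewrite E; apply/hO.
Qed.

Lemma exP x : exists i, (h i == x) || ~~ accepts (p_univ S) x.
Proof.
case Hx: (accepts (p_univ S) x); last by exists 0; rewrite orbT.
by case: (hS Hx) => i Hi; exists i; rewrite Hi eqxx.
Qed.

Definition idx x := ex_minn (exP x).
Lemma idxP x : accepts (p_univ S) x -> h (idx x) = x.
Proof. by rewrite /idx; case: ex_minnP => i /orP[/eqP -> //|/negP]. Qed.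
Lemma idx_h i : idx (h i) = i.
Proof. exact: h_inj (idxP (hU i)). Qed.

Definition Bd n := (\max_(t : n.-tuple B) idx t).+1.
Lemma Bd_ok i : i < Bd (size (h i)).
Proof.
rewrite /Bd ltnS -{1}(idx_h i).
exact: (leq_bigmax (F := fun t : (size (h i)).-tuple B => idx t) (in_tuple (h i))).
Qed.

Definition L n := [seq i <- iota 0 (Bd n) | size (h i) == n].
Lemma memL n i : (i \in L n) = (size (h i) == n).
Proof.
rewrite mem_filter mem_iota /= add0n; case: eqP => // <-; by rewrite Bd_ok.
Qed.
Lemma sortedL n : sorted ltn (L n).
Proof. exact: (@sorted_filter _ ltn ltn_trans _ _ (iota_ltn_sorted 0 (Bd n))). Qed.

Lemma outputs_unique T : corresponds S T -> forall n v, outputs T n v -> v = map w (L n).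
Proof.
case=> [cU [cL cO]] n v [h' [H1 [H2 [H3 H4]]]].
set m := size v.
have Su j : j < m -> accepts (p_univ S) (h' j) by move/H1 => [_]; rewrite cU.
pose sg j := idx (h' j).
have Hsg j : j < m -> h (sg j) = h' j by move=> Hj; exact: idxP (Su j Hj).
have Hsz j : j < m -> size (h' j) = n by move/H1 => [].
have Hlt j k : j < m -> k < m -> j < k -> sg j < sg k.
  move=> Hj Hk Hjk; rewrite ltnNge; apply/negP => /hO.
  rewrite Hsg // Hsg // cO ?Su ?Hsz // H3 // => Hkj.
  by rewrite leqNgt Hjk in Hkj.
have Hmap : map sg (iota 0 m) = L n.
  apply: (irr_sorted_eq ltn_trans ltnn).
  - rewrite sorted_map; apply: (sub_in_sorted (P := fun j => j < m)) (iota_ltn_sorted 0 m).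
      by move=> j k Hj Hk /= Hjk; exact: Hlt.
    by apply/allP => j; rewrite mem_iota add0n.
  - exact: sortedL.
  - move=> i; rewrite memL; apply/mapP/idP.
    + case=> j; rewrite mem_iota add0n => /andP[_ Hj] ->; by rewrite Hsg // Hsz.
    + move=> /eqP Hi; have := H2 (h i) Hi; rewrite -cU => /(_ (hU i)) [j Hj Hh].
      by exists j; rewrite ?mem_iota // /sg Hh idx_h.
rewrite -Hmap -map_comp; apply: seq_of_onth => // j Hj.
apply: (H4 j (w (sg j)) Hj).1; rewrite -cL ?Su // -Hsg //; exact/hL.
Qed.

Lemma exists_T : exists T : transduction Sigma B, total_transduction T /\ corresponds S T.
Proof.
exists (Trans allA (liftA (p_univ S)) (fun s => liftA (p_lab S s)) (liftLe (p_le S))).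
split; last first.
  split; first by move=> x; rewrite liftA_acc.
  split; first by move=> s x _ /=; rewrite liftA_acc.
  by move=> x y _ _ Hs /=; rewrite liftLe_acc.
move=> n; split; first exact: allA_acc.
exists (map w (L n)), (fun j => h (nth 0 (L n) j)).
split.
  move=> j; rewrite size_map => Hj; have := mem_nth 0 Hj; rewrite memL /= liftA_acc => /eqP ->.
  by split.
split.
  move=> x Hx /=; rewrite liftA_acc => Hu; case: (hS Hu) => i Hi.
  have Hin : i \in L n by rewrite memL Hi Hx.
  by exists (index i (L n)); rewrite ?size_map ?index_mem // nth_index.
split.
  move=> j k; rewrite size_map => Hj Hk /=.
  have Hsj : size (h (nth 0 (L n) j)) = n by apply/eqP; rewrite -memL mem_nth.
  have Hsk : size (h (nth 0 (L n) k)) = n by apply/eqP; rewrite -memL mem_nth.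
  by rewrite liftLe_acc ?Hsj ?Hsk // hO nth_leq // sortedL.
move=> j s; rewrite size_map => Hj /=; rewrite liftA_acc hL onth_map (onth_some 0) //=.
by split => [->|[]].
Qed.

Lemma antisym x y : accepts (p_univ S) x -> accepts (p_univ S) y ->
  accepts (p_le S) (conv2 x y) -> accepts (p_le S) (conv2 y x) -> x = y.
Proof.
move=> /hS [i <-] /hS [j <-] /hO H1 /hO H2; congr h; apply/eqP; by rewrite eqn_leq H1 H2.
Qed.

Hypothesis hM : length_monotonous S.

Lemma size_mono i j : i <= j -> size (h i) <= size (h j).
Proof.
move=> Hij; rewrite leqNgt; apply/negP => Hlt.
have Hji := (hO j i).1 (hM (hU j) (hU i) Hlt).
have E : i = j by apply/eqP; rewrite eqn_leq Hij Hji.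
by rewrite E ltnn in Hlt.
Qed.

Definition F k := flatten (map L (iota 0 k)).
Lemma F_S k : F k.+1 = F k ++ L k.
Proof. by rewrite /F -addn1 iotaD map_cat flatten_cat /= cats0. Qed.
Lemma memF k i : (i \in F k) = (size (h i) < k).
Proof.
elim: k => [|k IH]; first by rewrite ltn0.
by rewrite F_S mem_cat IH memL [RHS]ltnS [RHS]leq_eqVlt orbC.
Qed.
Lemma sortedF k : sorted ltn (F k).
Proof.
elim: k => // k IH; rewrite F_S; apply: sorted_cat_lt => //; first exact: sortedL.
move=> i j; rewrite memF memL => Hi /eqP Hj.
rewrite ltnNge; apply/negP => /size_mono; rewrite Hj; by rewrite leqNgt Hi.
Qed.
Lemma iotaF k : F k = iota 0 (size (F k)).
Proof.
apply: down_iota; first exact: sortedF.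
move=> i j; rewrite !memF => Hi Hj; exact: leq_ltn_trans (size_mono Hj) Hi.
Qed.

Lemma part5 T (u : nat -> seq Sigma) : corresponds S T ->
  (forall n, outputs T n (u n)) -> Pi_eq u w.
Proof.
move=> cT Hu.
have Eu n : u n = map w (L n) by exact: outputs_unique cT n (u n) (Hu n).
have Ep k : prefix_cat u k = map w (F k).
  by rewrite /prefix_cat /F map_flatten -map_comp; congr flatten; apply: eq_map.
split.
  move=> N; exists (size (h N)).+1; rewrite Ep size_map.
  have : N \in F (size (h N)).+1 by rewrite memF.
  by rewrite {1}iotaF mem_iota => /andP[].
move=> k i; rewrite Ep size_map => Hi.
have E := iotaF k; move: Hi; rewrite E size_iota => Hi.
by rewrite onth_map (onth_some 0) ?size_iota ?nth_iota.
Qed.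
End P1.
Definition outP (Sigma B : finType) (T : transduction Sigma B) (n : nat)
    (u : seq Sigma) (h : nat -> seq B) : Prop :=
    (forall i, i < size u -> size (h i) = n /\ accepts (t_univ T) (conv_a (h i))) /\
    (forall x : seq B, size x = n -> accepts (t_univ T) (conv_a x) ->
        exists2 i, i < size u & h i = x) /\
    (forall i j, i < size u -> j < size u ->
        (accepts (t_le T) (conv_a2 (h i) (h j)) <-> i <= j)) /\
    (forall i (s : Sigma), i < size u ->
        (accepts (t_lab T s) (conv_a (h i)) <-> onth u i = Some s)).

Section P2.
Variables (Sigma B : finType) (T : transduction Sigma B) (u : nat -> seq Sigma).
Variable H : nat -> nat -> seq B.
Hypothesis HH : forall n, outP T n (u n) (H n).
Hypothesis Hne : forall N, exists n, N <= n /\ u n != [::].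
Variable x0 : Sigma.

Fixpoint Sd n := if n is n'.+1 then Sd n' + size (u n') else 0.

Lemma Sd_mono m n : m <= n -> Sd m <= Sd n.
Proof.
elim: n => [|n IH]; first by rewrite leqn0 => /eqP ->.
rewrite leq_eqVlt => /orP[/eqP -> //|]; rewrite ltnS => /IH Hm.
exact: leq_trans Hm (leq_addr _ _).
Qed.

Lemma unb i : exists n, i < Sd n.
Proof.
elim: i => [|i [n Hn]].
  case: (Hne 0) => n [_ Hn]; exists n.+1 => /=; case: (u n) Hn => // a l _.
  by rewrite addnS.
case: (Hne n) => m [Hnm Hm]; exists m.+1 => /=.
have := Sd_mono Hnm; case: (u m) Hm => // a l _ /= Hle.
rewrite addnS ltnS; exact: leq_trans Hn (leq_trans Hle (leq_addr _ _)).
Qed.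

Lemma posE i : exists n, (Sd n <= i) && (i < Sd n.+1).
Proof.
case: (unb i) => n; elim: n => [|n IH] //= Hi.
case: (ltnP i (Sd n)) => [/IH //|Hn]; exists n; by rewrite Hn.
Qed.

Lemma pos_uniq n m i : (Sd n <= i) && (i < Sd n.+1) -> (Sd m <= i) && (i < Sd m.+1) -> n = m.
Proof.
move=> /andP[H1 H2] /andP[H3 H4]; case: (ltngtP n m) => // Hnm.
- have := Sd_mono Hnm; lia.
- have := Sd_mono Hnm; lia.
Qed.

Definition Np i := ex_minn (posE i).
Lemma NP i : (Sd (Np i) <= i) && (i < Sd (Np i).+1).
Proof. by rewrite /Np; case: ex_minnP. Qed.
Lemma N_eq n i : (Sd n <= i) && (i < Sd n.+1) -> Np i = n.
Proof. exact: pos_uniq (NP i). Qed.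

Definition ap i := i - Sd (Np i).
Lemma a_lt i : ap i < size (u (Np i)).
Proof. have := NP i; rewrite /ap /=; lia. Qed.

Definition hh i := H (Np i) (ap i).
Definition ww i := nth x0 (u (Np i)) (ap i).
Definition SS : presentation Sigma B :=
  Pres (projA (t_univ T)) (fun s => projA (t_lab T s)) (mkLe (t_le T)).

Lemma size_hh i : size (hh i) = Np i.
Proof. exact: ((HH (Np i)).1 (ap i) (a_lt i)).1. Qed.

Lemma SS_presents : presents SS ww.
Proof.
exists hh; split.
  by move=> i; rewrite /= projA_acc; exact: ((HH (Np i)).1 (ap i) (a_lt i)).2.
split.
  move=> x; rewrite /= projA_acc => Hx.
  case: ((HH (size x)).2.1 x erefl Hx) => j Hj Hh.
  have E : Np (Sd (size x) + j) = size x by apply: N_eq => /=; lia.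
  by exists (Sd (size x) + j); rewrite /hh /ap E addKn.
split.
  move=> i j; rewrite /= mkLe_acc !size_hh.
  have Hi := NP i; have Hj := NP j.
  case: (ltngtP (Np i) (Np j)) => Hij.
  - have := Sd_mono Hij; split => // _; lia.
  - have := Sd_mono Hij; split => // Hle; exfalso; lia.
  - rewrite /= /hh Hij (HH _).2.2.1 ?a_lt //; last by rewrite -Hij a_lt.
    rewrite /ap Hij; move: Hi Hj; rewrite Hij; split; lia.
move=> i s; rewrite /= projA_acc (HH (Np i)).2.2.2 ?a_lt // (onth_some x0) ?a_lt //.
by rewrite /ww; split => [[->]|->].
Qed.

Lemma SS_lm : length_monotonous SS.
Proof. by move=> x y _ _ Hxy; rewrite /= mkLe_acc Hxy. Qed.

Lemma SS_corr : corresponds SS T.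
Proof.
split; first by move=> x; rewrite /= projA_acc.
split; first by move=> s x _; rewrite /= projA_acc.
by move=> x y _ _ Hs; rewrite /= mkLe_acc Hs ltnn eqxx.
Qed.
End P2.

Theorem mainTheorem2 (Sigma B : finType) :
  (forall (S : presentation Sigma B) (w : nat -> Sigma),
      length_monotonous S -> presents S w ->
      exists T : transduction Sigma B, total_transduction T /\ corresponds S T) /\
  (forall (T : transduction Sigma B) (u : nat -> seq Sigma),
      total_transduction T -> (forall n, outputs T n (u n)) ->
      (forall N, exists n, N <= n /\ u n != [::]) ->
      exists (S : presentation Sigma B) (w : nat -> Sigma),
        length_monotonous S /\ presents S w /\ corresponds S T) /\
  (forall (S S' : presentation Sigma B) (w w' : nat -> Sigma)
          (T : transduction Sigma B),
      length_monotonous S -> presents S w ->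
      length_monotonous S' -> presents S' w' ->
      total_transduction T -> corresponds S T -> corresponds S' T ->
      same_pres S S') /\
  (forall (S : presentation Sigma B) (w : nat -> Sigma)
          (T T' : transduction Sigma B),
      length_monotonous S -> presents S w ->
      total_transduction T -> total_transduction T' ->
      corresponds S T -> corresponds S T' -> same_trans T T') /\
  (forall (S : presentation Sigma B) (w : nat -> Sigma)
          (T : transduction Sigma B) (u : nat -> seq Sigma),
      length_monotonous S -> presents S w ->
      total_transduction T -> corresponds S T ->
      (forall n, outputs T n (u n)) -> Pi_eq u w).
Proof.
split.
  move=> S w _ [h [hU [hS [hO hL]]]]; exact: exists_T hU hS hO hL.
split.
  move=> T u HT Hout Hne.
  have [H HH] : exists H : nat -> nat -> seq B, forall n, outP T n (u n) (H n).
    exists (fun n => proj1_sig (constructive_indefinite_description _ (Hout n))).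
    move=> n; exact: proj2_sig (constructive_indefinite_description _ (Hout n)).
  case: (Hne 0) => n [_]; case E: (u n) => [|x0 l] // _.
  exists (SS T); eexists; split; first exact: SS_lm.
  split; [exact: (SS_presents HH Hne x0) | exact: SS_corr].
split.
  move=> S S' w w' T hM [h [hU [hS [hO hL]]]] hM' [h' [hU' [hS' [hO' hL']]]] _
    [cU [cL cO]] [cU' [cL' cO']].
  have uu x : accepts (p_univ S) x <-> accepts (p_univ S') x.
    exact: iff_trans (cU x) (iff_sym (cU' x)).
  split; first exact uu.
  split.
    move=> s x Hx; have Hx' := (uu x).1 Hx.
    exact: iff_trans (cL s x Hx) (iff_sym (cL' s x Hx')).
  move=> x y Hx Hy; have Hx' := (uu x).1 Hx; have Hy' := (uu y).1 Hy.
  case: (ltngtP (size x) (size y)) => Hs.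
  - by split => _; [apply: hM' | apply: hM].
  - split => Hle; exfalso.
    + have E := antisym hS hO Hx Hy Hle (hM _ _ Hy Hx Hs).
      by rewrite E ltnn in Hs.
    + have E := antisym hS' hO' Hx' Hy' Hle (hM' _ _ Hy' Hx' Hs).
      by rewrite E ltnn in Hs.
  - exact: iff_trans (cO x y Hx Hy Hs) (iff_sym (cO' x y Hx' Hy' Hs)).
split.
  move=> S w T T' _ _ _ _ [cU [cL cO]] [cU' [cL' cO']].
  split; first by move=> x; exact: iff_trans (iff_sym (cU x)) (cU' x).
  split.
    move=> s x Hx; have Hx' := (cU x).2 Hx.
    exact: iff_trans (iff_sym (cL s x Hx')) (cL' s x Hx').
  move=> x y Hx Hy Hs; have Hx' := (cU x).2 Hx; have Hy' := (cU y).2 Hy.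
  exact: iff_trans (iff_sym (cO x y Hx' Hy' Hs)) (cO' x y Hx' Hy' Hs).
move=> S w T u hM [h [hU [hS [hO hL]]]] _ cT Hu; exact: (part5 hU hS hO hL hM cT Hu).
Qed.
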